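(* Let $K$ be a field and let $T$ be a tree with at least two edges. Then there is a monomial order such that the cut ideal $I_T$ has a quadratic squarefree Gröbner basis. In particular, the corresponding initial ideal is squarefree.
   Context: For a finite simple graph $G$ with vertex set $V(G)$ and edge set $E(G)$, an unordered partition $A|B$ of $V(G)$ (into two sets, one of which may be empty) defines the cut $Cut(A|B)$, the set of edges with one endpoint in $A$ and the other in $B$. The cut ideal $I_G$ is the kernel of the $K$-algebra homomorphism $\phi_G: K[q_{A|B} : A|B \text{ unordered partition of } V(G)] \to K[s_{ij}, t_{ij} : \{i,j\} \in E(G)]$, $q_{A|B} \mapsto \prod_{\{i,j\}\in Cut(A|B)} s_{ij} \prod_{\{i,j\}\in E(G)\setminus Cut(A|B)} t_{ij}$. A squarefree Gröbner basis is a Gröbner basis consisting of binomials, each a difference of two squarefree monomials; quadratic means each binomial has degree two. *)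

(* Defs.v *)
From HB Require Import structures.
From mathcomp Require Import all_boot all_order all_algebra.
From mathcomp Require Export mpoly.
Set Implicit Arguments. Unset Strict Implicit. Unset Printing Implicit Defensive.
Import Order.TTheory GRing.Theory.
Local Open Scope ring_scope.

Definition simple_graph (V : finType) (E : rel V) : Prop :=
  ssrbool.symmetric E /\ ssrbool.irreflexive E.

Definition edges (V : finType) (E : rel V) : {set {set V}} :=
  [set [set x; y] | x in V, y in V & E x y].

Definition connected_graph (V : finType) (E : rel V) : Prop :=
  forall x y : V, connect E x y.

Definition acyclic_graph (V : finType) (E : rel V) : Prop :=
  forall c : seq V, ucycle E c -> (size c < 3)%N.

Definition is_tree (V : finType) (E : rel V) : Prop :=
  simple_graph E /\ connected_graph E /\ acyclic_graph E.

(* an unordered partition A|B of V (one block possibly empty) is the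
   unordered pair {A, V \ A} *)
Definition is_upart (V : finType) (P : {set {set V}}) : bool :=
  [exists A : {set V}, P == [set A; ~: A]].

Definition upart (V : finType) := {P : {set {set V}} | is_upart P}.

Definition in_cut (V : finType) (P : upart V) (e : {set V}) : bool :=
  [exists A in val P, [exists i in e, [exists j in e, (i \in A) && (j \notin A)]]].

Definition edge_t (V : finType) (E : rel V) := {e : {set V} | e \in edges E}.

(* source ring K[q_{A|B}] : one variable per unordered partition *)
Definition qring (K : fieldType) (V : finType) := {mpoly K[#|{: upart V}|]}.
(* target ring K[s_e, t_e : e in E(G)] : variables indexed by edge + edge,
   inl e = s_e, inr e = t_e *)
Definition string (K : fieldType) (V : finType) (E : rel V) :=
  {mpoly K[#|{: (edge_t E + edge_t E)%type}|]}.

Definition s_var (K : fieldType) (V : finType) (E : rel V) (e : edge_t E)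
  : string K E := 'X_(enum_rank (inl e : (edge_t E + edge_t E)%type)).
Definition t_var (K : fieldType) (V : finType) (E : rel V) (e : edge_t E)
  : string K E := 'X_(enum_rank (inr e : (edge_t E + edge_t E)%type)).

Definition phi_q (K : fieldType) (V : finType) (E : rel V)
  (i : 'I_#|{: upart V}|) : string K E :=
  let P := enum_val i in
  \prod_(e : edge_t E) (if in_cut P (val e) then s_var K e else t_var K e).

Definition phi_G (K : fieldType) (V : finType) (E : rel V) (f : qring K V)
  : string K E := mmap (fun c : K => c%:MP) (phi_q K E) f.

Definition cut_ideal (K : fieldType) (V : finType) (E : rel V)
  : pred (qring K V) := fun f => phi_G E f == 0.

Definition monomial_order (n : nat) (le : rel 'X_{1..n}) : Prop :=
  [/\ ssrbool.reflexive le, ssrbool.antisymmetric le, ssrbool.transitive le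
    & ssrbool.total le] /\
  (forall m, le 0%MM m) /\
  (forall m1 m2 m, le m1 m2 -> le (m1 + m)%MM (m2 + m)%MM).

Definition is_lm (K : fieldType) (n : nat) (le : rel 'X_{1..n})
  (p : {mpoly K[n]}) (m : 'X_{1..n}) : Prop :=
  m \in msupp p /\ (forall m', m' \in msupp p -> le m' m).

(* G is a Groebner basis of I w.r.t. le: G is contained in I and the leading
   monomials of G generate the initial ideal in_le(I), i.e. the leading monomial
   of every nonzero f in I is divisible by the leading monomial of some g in G *)
Definition groebner_basis (K : fieldType) (n : nat) (le : rel 'X_{1..n})
  (I : pred {mpoly K[n]}) (G : seq {mpoly K[n]}) : Prop :=
  (forall g, g \in G -> I g) /\
  (forall f, I f -> f != 0 ->
     exists2 g, g \in G &
       exists mf mg, [/\ is_lm le f mf, is_lm le g mg & (mg <= mf)%MM]).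

Definition squarefree_mono (n : nat) (m : 'X_{1..n}) : bool :=
  [forall i : 'I_n, (m i <= 1)%N].

Definition sqfree_quad_binomial (K : fieldType) (n : nat) (g : {mpoly K[n]})
  : Prop :=
  exists m1 m2 : 'X_{1..n},
    [/\ squarefree_mono m1 && squarefree_mono m2, mdeg m1 = 2%N, mdeg m2 = 2%N,
       m1 != m2 & g = 'X_[m1] - 'X_[m2]].

(* monomials of the initial ideal in_le(I) (I an ideal, so the set of leading
   monomials of elements of I is closed under multiples) *)
Definition in_initial (K : fieldType) (n : nat) (le : rel 'X_{1..n})
  (I : pred {mpoly K[n]}) (m : 'X_{1..n}) : Prop :=
  exists2 f, I f & is_lm le f m.

(* in_le(I) is a squarefree monomial ideal: generated by squarefree monomials *)
Definition squarefree_initial (K : fieldType) (n : nat) (le : rel 'X_{1..n})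
  (I : pred {mpoly K[n]}) : Prop :=
  forall m, in_initial le I m ->
    exists m', [/\ in_initial le I m', squarefree_mono m' & (m' <= m)%MM].

(* Main.v *)
Require Import Defs.
From HB Require Import structures.
From mathcomp Require Import all_boot all_order all_algebra.
From mathcomp Require Import mpoly.
From mathcomp Require Import zify.
Set Implicit Arguments. Unset Strict Implicit.

Section Graph.
Variables (V : finType) (E : rel V).

Lemma edgesP e : reflect (exists x y, E x y /\ e = [set x; y]) (e \in edges E).
Proof.
apply: (iffP imset2P).
  by case=> x y _; rewrite inE => /andP[_ Exy] ->; exists x, y.
by case=> x [y [Exy ->]]; exists x y => //; rewrite inE Exy.
Qed.

Definition mkup (A : {set V}) : upart V.
Proof. exists [set A; ~: A]; apply/existsP; by exists A. Defined.

Lemma upartP (P : upart V) : exists A, P = mkup A.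
Proof.
case: P => P HP; case/existsP: (HP) => A /eqP eP; exists A.
by apply: val_inj.
Qed.

Lemma in_cut_mk A x y : in_cut (mkup A) [set x; y] = ((x \in A) != (y \in A)).
Proof.
apply/existsP/idP.
  case=> A' /andP [HA /existsP [i /andP [Hi /existsP [j /andP [Hj /andP [HiA HjA]]]]]].
  move: HA Hi Hj HiA HjA; rewrite !inE.
  by case/orP=> /eqP -> /orP [] /eqP -> /orP [] /eqP ->; rewrite ?inE; do 2 case: (_ \in A).
case Ex: (x \in A); case Ey: (y \in A) => // _.
  exists A; rewrite /= !inE eqxx /=; apply/existsP; exists x; rewrite !inE eqxx /=.
  by apply/existsP; exists y; rewrite !inE eqxx Ex Ey orbT.
exists A; rewrite /= !inE eqxx /=; apply/existsP; exists y; rewrite !inE eqxx orbT /=.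
by apply/existsP; exists x; rewrite !inE eqxx Ex Ey.
Qed.


Definition cutS (P : upart V) : {set edge_t E} := [set e | in_cut P (val e)].

Lemma edge_tP (e : edge_t E) : exists x y, E x y /\ val e = [set x; y].
Proof. by case: e => e /= /edgesP. Qed.

Lemma cutS_mk A (e : edge_t E) x y : val e = [set x; y] ->
  (e \in cutS (mkup A)) = ((x \in A) != (y \in A)).
Proof. by move=> ev; rewrite inE ev in_cut_mk. Qed.

Lemma cutS_xor P Q : exists R, cutS R = (cutS P :\: cutS Q) :|: (cutS Q :\: cutS P).
Proof.
case: (upartP P) => A ->; case: (upartP Q) => B ->.
exists (mkup [set x | (x \in A) != (x \in B)]); apply/setP => e.
case: (edge_tP e) => x [y [_ ev]].
rewrite in_setU !in_setD !(cutS_mk _ ev) !inE.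
by do 4 case: (_ \in _).
Qed.

Lemma cutS0 : cutS (mkup set0) = set0.
Proof.
apply/setP => e; case: (edge_tP e) => x [y [_ ev]].
by rewrite (cutS_mk _ ev) !inE.
Qed.

Hypothesis tree : is_tree E.

Lemma Esym : ssrbool.symmetric E. Proof. by case: tree => [[]]. Qed.
Lemma Eirr : ssrbool.irreflexive E. Proof. by case: tree => [[]]. Qed.

Lemma cutS_single (e : edge_t E) : exists P, cutS P = [set e].
Proof.
case: (edge_tP e) => u [v [Euv ev]].
pose E' := [rel x y | E x y && ([set x; y] != [set u; v])].
exists (mkup [set x | connect E' u x]).
have E'sym : ssrbool.symmetric E'.
  by move=> x y; rewrite /E' /= Esym setUC.
have vA : ~~ connect E' u v.
  apply/negP => /connectP [p pp lp].
  move: lp; case: (shortenP pp) => p' pp' up' _ lp'.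
  have cyc : ucycle E (u :: p').
    rewrite /ucycle up' andbT /cycle rcons_path -lp' Esym Euv andbT.
    by apply: sub_path pp' => x y /andP [].
  case: tree => _ [_ /(_ _ cyc)].
  case: p' pp' up' lp' {cyc} => [|w [|w' p']] //=.
    by move=> _ _ uv; move: Euv; rewrite uv Eirr.
  by move=> /andP [] /andP [_]; move=> H _ _ wv; move: H; rewrite wv eqxx.
apply/setP => f; case: (edge_tP f) => x [y [Exy fv]].
rewrite (cutS_mk _ fv) !inE.
case: (eqVneq f e) => [fe|nfe].
  have: [set x; y] = [set u; v] by rewrite -fv -ev fe.
  move=> exy.
  have xuv : x \in [set u; v] by rewrite -exy !inE eqxx.
  have yuv : y \in [set u; v] by rewrite -exy !inE eqxx orbT.
  have nxy : x != y by apply/eqP => xy; move: Exy; rewrite xy Eirr.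
  move: xuv yuv nxy vA; rewrite !inE => /orP [] /eqP -> /orP [] /eqP ->;
    rewrite ?eqxx ?connect0 //=; by case: (connect _ _ _).
have nf : [set x; y] != [set u; v].
  apply/eqP => exy; apply: (negP nfe); apply/eqP; apply: val_inj; by rewrite /= fv ev exy.
have E'xy : E' x y by rewrite /E' /= Exy nf.
have : connect E' u x = connect E' u y.
  apply/idP/idP => H; apply: connect_trans H _; apply: connect1 => //.
  by rewrite E'sym.
by move=> ->; rewrite eqxx.
Qed.


Lemma cutS_surj S : exists P, cutS P = S.
Proof.
move: {2}#|S| (leqnn #|S|) => n; elim: n S => [|n IH] S.
  rewrite leqn0 cards_eq0 => /eqP ->; exists (mkup set0); exact: cutS0.
case: (set_0Vmem S) => [->|[e eS]] HS; first by exists (mkup set0); exact: cutS0.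
have : #|S :\ e| <= n by move: HS; rewrite (cardsD1 e S) eS.
case/IH => P HP; case: (cutS_single e) => Q HQ; case: (cutS_xor P Q) => R HR.
exists R; rewrite HR HP HQ; apply/setP => f; rewrite !inE.
by case: (eqVneq f e) => [->|_] /=; last case: (f \in S).
Qed.

Lemma cutS_inj P Q : cutS P = cutS Q -> P = Q.
Proof.
case: (upartP P) => A ->; case: (upartP Q) => B -> H.
pose D := [set x | (x \in A) != (x \in B)].
have Dedge x y : E x y -> (x \in D) = (y \in D).
  move=> Exy; have ee : [set x; y] \in edges E by apply/edgesP; exists x, y.
  pose e : edge_t E := exist (fun s => s \in edges E) _ ee.
  have := congr1 (fun S : {set edge_t E} => e \in S) H.
  rewrite /= !(@cutS_mk _ e x y) // !inE.
  by do 4 case: (_ \in _).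
have Dpath x p : path E x p -> forall z, z \in p -> (z \in D) = (x \in D).
  elim: p x => //= z p IH x /andP [Exz pz] w; rewrite inE => /orP [/eqP ->|wp].
    by rewrite (Dedge _ _ Exz).
  by rewrite (IH z pz w wp) (Dedge _ _ Exz).
have Dconst x y : (y \in D) = (x \in D).
  case: tree => _ [/(_ x y) /connectP [p pp ->] _].
  have := mem_last x p; rewrite inE => /orP [/eqP ->|]; first by [].
  exact: Dpath.
case: (pickP (fun x : V => true)) => [x0 _|none]; last first.
  have -> : A = B by apply/setP => x; have := none x.
  by [].
case x0D : (x0 \in D).
  have -> : B = ~: A.
    apply/setP => y; have := Dconst x0 y; rewrite x0D !inE.
    by case: (_ \in A); case: (_ \in B).
  by apply: val_inj; rewrite /= setCK setUC.
have -> : B = A.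
  apply/setP => y; have := Dconst x0 y; rewrite x0D !inE.
  by case: (_ \in A); case: (_ \in B).
by [].
Qed.

End Graph.
Section Lin.
Variable n : nat.
Definition lin (F : 'I_n -> nat) (m : 'X_{1..n}) := (\sum_i m i * F i)%N.

Lemma linD F m1 m2 : lin F (m1 + m2)%MM = (lin F m1 + lin F m2)%N.
Proof. by rewrite /lin -big_split; apply: eq_bigr => i _; rewrite mnmDE mulnDl. Qed.

Lemma lin0 F : lin F 0%MM = 0%N.
Proof. by rewrite /lin big1 // => i _; rewrite mnm0E. Qed.

Lemma linU F k : lin F U_(k)%MM = F k.
Proof.
rewrite /lin (bigD1 k) //= big1 ?addn0; first by rewrite mnm1E eqxx mul1n.
by move=> i /negbTE ik; rewrite mnm1E eq_sym ik.
Qed.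

Lemma mdeg_lin m : mdeg m = lin (fun _ => 1%N) m.
Proof. by rewrite mdegE /lin; apply: eq_bigr => i _; rewrite muln1. Qed.
End Lin.

Section Comb.
Variables (T : finType) (n : nat) (C : 'I_n -> {set T}).
Hypothesis Cinj : injective C.
Hypothesis Csurj : forall S, exists i, C i = S.

Definition cnt (e : T) := lin (fun i => (e \in C i) : nat).
Definition K0 := (#|T| * #|T|)%N.
Definition W i := (K0 - #|C i| * #|C i|)%N.
Definition wt := lin W.

Definition sortedm (m : 'X_{1..n}) := [forall i, forall j,
  (0 < m i)%N ==> (0 < m j)%N ==> (C i \subset C j) || (C j \subset C i)].

Definition incomp i j := ~~ (C i \subset C j) && ~~ (C j \subset C i).

Definition samekey (m1 m2 : 'X_{1..n}) :=
  mdeg m1 = mdeg m2 /\ forall e, cnt e m1 = cnt e m2.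

Lemma swap_kl i j k l : incomp i j -> C k = C i :&: C j -> C l = C i :|: C j ->
  [/\ samekey (U_(k) + U_(l))%MM (U_(i) + U_(j))%MM,
      (wt (U_(k) + U_(l)) < wt (U_(i) + U_(j)))%N, k != l & i != j].
Proof.
case/andP => nij nji Ck Cl.
split.
- split; first by rewrite !mdegD !mdeg1.
  by move=> e; rewrite /cnt !linD !linU Ck Cl !inE; do 2 case: (_ \in _).
- rewrite /wt !linD !linU /W Ck Cl.
  have hU := cardsUI (C i) (C j).
  have hi : #|C i| = (#|C i :&: C j| + #|C i :\: C j|)%N by rewrite cardsID.
  have hj : #|C j| = (#|C j :&: C i| + #|C j :\: C i|)%N by rewrite cardsID.
  rewrite setIC in hj.
  have p1 : (0 < #|C i :\: C j|)%N by rewrite card_gt0 setD_eq0.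
  have p2 : (0 < #|C j :\: C i|)%N by rewrite card_gt0 setD_eq0.
  have bU : (#|C i :|: C j| <= #|T|)%N by apply: max_card.
  rewrite /K0.
  set x := #|C i :&: C j| in hU hi hj *; set y := #|C i :|: C j| in hU bU *.
  set a := #|C i| in hU hi *; set b := #|C j| in hU hj *.
  set t := #|T| in bU *.
  nia.
- apply/eqP => kl; move: Ck; rewrite kl Cl => /setP H.
  by case/negP: nij; apply/subsetP => x xi; have := H x; rewrite !inE xi /=.
- by apply/eqP => ij; move: nij; rewrite ij subxx.
Qed.

Lemma swap i j : incomp i j -> exists k l,
  [/\ samekey (U_(k) + U_(l))%MM (U_(i) + U_(j))%MM,
      (wt (U_(k) + U_(l)) < wt (U_(i) + U_(j)))%N, k != l & i != j].
Proof.
move=> ij; case: (Csurj (C i :&: C j)) => k Ck; case: (Csurj (C i :|: C j)) => l Cl.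
by exists k, l; apply: swap_kl.
Qed.

Lemma unsortedP (m : 'X_{1..n}) : ~~ sortedm m ->
  exists i j, [/\ (0 < m i)%N, (0 < m j)%N & incomp i j].
Proof.
move/forallPn => [i /forallPn [j]]; rewrite !negb_imply negb_or => /and3P [mi mj nc].
by exists i, j; split.
Qed.

Lemma UU_le (m : 'X_{1..n}) i j : i != j -> (0 < m i)%N -> (0 < m j)%N -> (U_(i) + U_(j) <= m)%MM.
Proof.
move=> ij mi mj; apply/mnm_lepP => r; rewrite mnmDE !mnm1E.
case: (boolP (i == r)) => [/eqP ir|nir]; case: (boolP (j == r)) => [/eqP jr|njr] /=.
- by move: ij; rewrite ir jr eqxx.
- by rewrite -ir.
- by rewrite -jr.
- by [].
Qed.

Lemma samekey_sym (m1 m2 : 'X_{1..n}) : samekey m1 m2 -> samekey m2 m1.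
Proof. by case=> h1 h2; split => // e; rewrite h2. Qed.

Lemma samekey_trans m1 m2 m3 : samekey m1 m2 -> samekey m2 m3 -> samekey m1 m3.
Proof. by case=> h1 h2 [h3 h4]; split => [|e]; rewrite ?h1 ?h2. Qed.

Lemma samekeyD r m1 m2 : samekey m1 m2 -> samekey (r + m1)%MM (r + m2)%MM.
Proof. by case=> h1 h2; split => [|e]; rewrite ?mdegD ?h1 // /cnt !linD -/(cnt e) h2. Qed.

Lemma samekeyDK r m1 m2 : samekey (m1 + r)%MM (m2 + r)%MM -> samekey m1 m2.
Proof.
case=> h1 h2; split => [|e]; first by move: h1; rewrite !mdegD => /addIn.
by move: (h2 e); rewrite /cnt !linD => /addIn.
Qed.

Lemma sort_exists (m : 'X_{1..n}) : exists m',
  [/\ sortedm m', samekey m' m, (wt m' <= wt m)%N & (~~ sortedm m -> (wt m' < wt m)%N)].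
Proof.
have [N] := ubnP (wt m); elim: N m => // N IH m Hm.
case sm: (sortedm m); first by exists m; split.
case: (unsortedP (negbT sm)) => i [j [mi mj ij]].
case: (swap ij) => k [l [sk wl kl nij]].
have le := UU_le nij mi mj.
pose r := (m - (U_(i) + U_(j)))%MM.
have mE : m = (r + (U_(i) + U_(j)))%MM by rewrite /r submK.
pose m'' := (r + (U_(k) + U_(l)))%MM.
have w'' : (wt m'' < wt m)%N by rewrite [in X in (_ < X)%N]mE /m'' /wt (linD W r) (linD W r) ltn_add2l.
case: (IH m'') => [|m3 [s3 k3 w3 _]]; first by apply: leq_trans w'' _; rewrite -ltnS.
exists m3; split => //.
- apply: samekey_trans k3 _; rewrite [X in samekey _ X]mE; exact: samekeyD.
- exact: leq_trans w3 (ltnW w'').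
- by move=> _; apply: leq_ltn_trans w3 w''.
Qed.

Lemma sortedm_le (m m' : 'X_{1..n}) : (forall r, m' r <= m r)%N -> sortedm m -> sortedm m'.
Proof.
move=> le /forallP H; apply/forallP => i; apply/forallP => j.
apply/implyP => mi; apply/implyP => mj.
have := forallP (H i) j.
by rewrite (leq_trans mi (le i)) (leq_trans mj (le j)).
Qed.

Lemma top (m : 'X_{1..n}) : sortedm m -> m != 0%MM ->
  exists i, (0 < m i)%N /\ C i = [set e | (0 < cnt e m)%N].
Proof.
move=> sm nm.
have [i0 mi0] : exists i, (0 < m i)%N.
  apply/existsP; apply: contraR nm => /existsPn H; apply/eqP/mnmP => r.
  by rewrite mnm0E; move: (H r); rewrite lt0n negbK => /eqP.
case: (@arg_maxnP _ i0 (fun i => 0 < m i)%N (fun i => #|C i|) mi0) => i mi imax.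
exists i; split => //; apply/setP => e; rewrite inE.
apply/idP/idP => [ei|].
  rewrite /cnt /lin (bigD1 i) //= ei muln1.
  exact: leq_trans mi (leq_addr _ _).
case: (pickP (fun j => (0 < m j) && (e \in C j))%N) => [j /andP [mj ej]|none].
  have := forallP (forallP sm i) j; rewrite mi mj /= => /orP [sij|sji].
    have cj := imax j mj.
    have : C i == C j by rewrite eqEcard sij; exact: cj.
    by move/eqP => ->.
  by move=> _; exact: (subsetP sji _ ej).
rewrite /cnt /lin big1 // => j _.
by move: (none j); rewrite lt0n; case: eqP => [->|] //= _ ->; rewrite muln0.
Qed.

Lemma sorted_uniq m1 m2 : sortedm m1 -> sortedm m2 -> samekey m1 m2 -> m1 = m2.
Proof.
have [d] := ubnP (mdeg m1); elim: d m1 m2 => // d IH m1 m2 Hd s1 s2 k12.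
case: (eqVneq m1 0%MM) => [m10|nm1].
  have := k12.1; rewrite m10 mdeg0 => /esym/eqP; rewrite mdeg_eq0 => /eqP ->.
  by [].
have nm2 : m2 != 0%MM.
  by rewrite -mdeg_eq0 -k12.1 mdeg_eq0.
case: (top s1 nm1) => i1 [mi1 C1]; case: (top s2 nm2) => i2 [mi2 C2].
have ei : i1 = i2.
  apply: Cinj; rewrite C1 C2; apply/setP => e; by rewrite !inE k12.2.
subst i2.
have l1 : (U_(i1) <= m1)%MM by apply/mnm_lepP => r; rewrite mnm1E; case: eqP => [<-|].
have l2 : (U_(i1) <= m2)%MM by apply/mnm_lepP => r; rewrite mnm1E; case: eqP => [<-|].
have E1 := submK l1; have E2 := submK l2.
have k' : samekey (m1 - U_(i1)) (m2 - U_(i1)) by apply: (@samekeyDK U_(i1)); rewrite E1 E2.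
have le1 r : ((m1 - U_(i1))%MM r <= m1 r)%N by rewrite mnmBE leq_subr.
have le2 r : ((m2 - U_(i1))%MM r <= m2 r)%N by rewrite mnmBE leq_subr.
rewrite -E1 -E2 (IH _ _ _ (sortedm_le le1 s1) (sortedm_le le2 s2) k') //.
move: Hd; rewrite -{1}E1 mdegD mdeg1 addn1 ltnS; by [].
Qed.
End Comb.

Section Alg.
Variables (K : fieldType) (V : finType) (E : rel V).
Hypothesis tree : is_tree E.
Hypothesis two : (2 <= #|edges E|)%N.

Local Open Scope ring_scope.
Import Order.TTheory GRing.Theory.
Local Notation n := #|{: upart V}|.
Local Notation M := #|{: (edge_t E + edge_t E)%type}|.

Definition Cf (i : 'I_n) : {set edge_t E} := cutS E (enum_val i).

Lemma Cf_inj : injective Cf.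
Proof. move=> i j /(cutS_inj tree); exact: enum_val_inj. Qed.

Lemma Cf_surj S : exists i, Cf i = S.
Proof. case: (cutS_surj tree S) => P HP; exists (enum_rank P); by rewrite /Cf enum_rankK. Qed.

Definition tg (S : {set edge_t E}) (e : edge_t E) : 'I_M :=
  enum_rank (if e \in S then inl e else inr e).

Definition nu (i : 'I_n) : 'X_{1..M} := (\sum_e U_(tg (Cf i) e))%MM.
Definition mu (m : 'X_{1..n}) : 'X_{1..M} := (\sum_i (nu i *+ m i))%MM.

Lemma prodX (I : finType) (F : I -> 'X_{1..M}) :
  \prod_i ('X_[F i] : {mpoly K[M]}) = 'X_[\big[+%MM/0%MM]_i F i].
Proof. by apply/esym/(big_morph (fun m => 'X_[m] : {mpoly K[M]})); [exact: mpolyXD|exact: mpolyX0]. Qed.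

Lemma phi_qE i : phi_q K E i = 'X_[nu i].
Proof.
rewrite /phi_q /nu -prodX; apply: eq_bigr => e _.
by rewrite /tg /Cf inE; case: (in_cut _ _).
Qed.

Lemma mmap1E m : mmap1 (phi_q K E) m = 'X_[mu m].
Proof.
rewrite /mmap1 /mu -prodX; apply: eq_bigr => i _.
by rewrite phi_qE mpolyXn.
Qed.

Lemma phi_GE (f : {mpoly K[n]}) : phi_G E f = \sum_(m <- msupp f) (f@_m)%:MP * 'X_[mu m].
Proof. by rewrite /phi_G /mmap; apply: eq_bigr => m _; rewrite mmap1E. Qed.


Definition tcnt (e : edge_t E) := lin (fun i => (e \notin Cf i) : nat).

Lemma nu_l i e : nu i (enum_rank (inl e)) = (e \in Cf i) :> nat.
Proof.
rewrite /nu mnm_sumE (bigD1 e) //= big1 ?addn0.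
  by rewrite mnm1E /tg (inj_eq enum_rank_inj); case: (e \in Cf i) => //=; rewrite eqxx.
move=> f fe; rewrite mnm1E /tg (inj_eq enum_rank_inj).
case: ifP => _; case: eqP => // -[]; move=> fe'; by rewrite fe' eqxx in fe.
Qed.

Lemma nu_r i e : nu i (enum_rank (inr e)) = (e \notin Cf i) :> nat.
Proof.
rewrite /nu mnm_sumE (bigD1 e) //= big1 ?addn0.
  by rewrite mnm1E /tg (inj_eq enum_rank_inj); case: (e \in Cf i) => //=; rewrite eqxx.
move=> f fe; rewrite mnm1E /tg (inj_eq enum_rank_inj).
case: ifP => _; case: eqP => // -[]; move=> fe'; by rewrite fe' eqxx in fe.
Qed.

Lemma mu_l m e : mu m (enum_rank (inl e)) = cnt Cf e m.
Proof.
rewrite /mu mnm_sumE /cnt /lin; apply: eq_bigr => i _.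
by rewrite mulmnE nu_l mulnC.
Qed.

Lemma mu_r m e : mu m (enum_rank (inr e)) = tcnt e m.
Proof.
rewrite /mu mnm_sumE /tcnt /lin; apply: eq_bigr => i _.
by rewrite mulmnE nu_r mulnC.
Qed.

Lemma cnt_tcnt m e : (cnt Cf e m + tcnt e m)%N = mdeg m.
Proof.
rewrite mdeg_lin /cnt /tcnt /lin -big_split; apply: eq_bigr => i _.
by rewrite /= -mulnDr; case: (e \in Cf i).
Qed.

Lemma mu_key m1 m2 : mu m1 = mu m2 <-> samekey Cf m1 m2.
Proof.
split => [H|[h1 h2]].
  have [x ex] : exists x, x \in edges E by apply/card_gt0P; exact: ltnW.
  pose e0 : edge_t E := exist (fun s => s \in edges E) _ ex.
  have hc e : cnt Cf e m1 = cnt Cf e m2 by rewrite -!mu_l H.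
  split => //.
  by rewrite -(cnt_tcnt m1 e0) -(cnt_tcnt m2 e0) -!mu_r H hc.
apply/mnmP => r; rewrite -(enum_valK r); case: (enum_val r) => e.
  by rewrite !mu_l h2.
have := cnt_tcnt m1 e; have := cnt_tcnt m2 e.
rewrite !mu_r h2 h1 => <-; exact: addnI.
Qed.

Definition leM (m1 m2 : 'X_{1..n}) : bool :=
  (wt Cf m1 < wt Cf m2)%N || ((wt Cf m1 == wt Cf m2) && (m1 <= m2)%O).

Lemma leM_mo : monomial_order leM.
Proof.
split; [split|split].
- by move=> m; rewrite /leM eqxx lexx orbT.
- move=> m1 m2; rewrite /leM.
  case: (ltngtP (wt Cf m1) (wt Cf m2)) => //= _ /andP [l1 l2].
  by apply: le_anti; rewrite l1 l2.
- move=> m2 m1 m3; rewrite /leM.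
  case: (ltngtP (wt Cf m1) (wt Cf m2)) => //= h12;
  case: (ltngtP (wt Cf m2) (wt Cf m3)) => //= h23.
  + by rewrite (ltn_trans h12 h23).
  + by rewrite -h23 h12.
  + by rewrite h12 h23.
  + by move=> l1 l2; rewrite h12 h23 eqxx (le_trans l1 l2) orbT.
- move=> m1 m2; rewrite /leM.
  case: (ltngtP (wt Cf m1) (wt Cf m2)) => //= h; rewrite ?h ?eqxx ?orbT //.
  exact: le_total.
- move=> m; rewrite /leM /wt lin0.
  have [->|h] := eqVneq (lin (W Cf) m) 0%N; last by rewrite lt0n h.
  by rewrite /=; have := lemc_addr 0%MM m; rewrite add0m.
- move=> m1 m2 m; rewrite /leM /wt !linD ltn_add2r eqn_add2r lemc_add2l.
  by [].
Qed.

Lemma leM_refl : ssrbool.reflexive leM. Proof. by case: leM_mo => [[]]. Qed.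
Lemma leM_anti : ssrbool.antisymmetric leM. Proof. by case: leM_mo => [[]]. Qed.
Lemma leM_trans : ssrbool.transitive leM. Proof. by case: leM_mo => [[]]. Qed.
Lemma leM_total : ssrbool.total leM. Proof. by case: leM_mo => [[]]. Qed.

Lemma leM_wt m1 m2 : leM m1 m2 -> (wt Cf m1 <= wt Cf m2)%N.
Proof. by rewrite /leM => /orP [/ltnW //|/andP [/eqP -> _]]. Qed.

Lemma max_exists (s : seq 'X_{1..n}) : s != [::] ->
  exists2 x, x \in s & forall y, y \in s -> leM y x.
Proof.
elim: s => // a s IH _.
case: (eqVneq s [::]) => [->|ns].
  by exists a; rewrite ?inE // => y; rewrite inE => /eqP ->; apply: leM_refl.
case: (IH ns) => x xs xmax.
case/orP: (leM_total a x) => ax.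
  by exists x; rewrite ?inE ?xs ?orbT // => y; rewrite inE => /orP [/eqP ->|/xmax].
exists a; rewrite ?inE ?eqxx // => y; rewrite inE => /orP [/eqP ->|/xmax ya].
  exact: leM_refl.
exact: leM_trans ya ax.
Qed.

Lemma phiX m : phi_G E ('X_[m] : {mpoly K[n]}) = 'X_[mu m].
Proof. by rewrite /phi_G mmapX mmap1E. Qed.

Lemma kernel_pair (f : {mpoly K[n]}) m0 : cut_ideal E f -> m0 \in msupp f ->
  exists m2, [/\ m2 \in msupp f, m2 != m0 & mu m2 = mu m0].
Proof.
move=> /eqP If m0f.
case: (boolP (has (fun m => (m != m0) && (mu m == mu m0)) (msupp f))).
  by case/hasP => m mf /andP [nm /eqP e]; exists m.
move/hasPn => H; exfalso.
have := congr1 (mcoeff (mu m0)) If; rewrite phi_GE mcoeff0 raddf_sum /=.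
rewrite (big_rem m0) //= big_seq big1; last first.
  move=> m; rewrite (mem_rem_uniq _ (msupp_uniq f)) inE => /andP [nm mf].
  have := H m mf; rewrite nm /= => nmu.
  by rewrite mcoeffCM mcoeffX (negbTE nmu) mulr0.
rewrite addr0 mcoeffCM mcoeffX eqxx mulr1 => /eqP.
by rewrite mcoeff_eq0 m0f.
Qed.

Lemma lead_unsorted (f : {mpoly K[n]}) mf : cut_ideal E f -> is_lm leM f mf ->
  ~~ sortedm Cf mf.
Proof.
move=> If [mff mfmax]; apply/negP => smf.
case: (kernel_pair If mff) => m2 [m2f nm2 mu2].
have k2 : samekey Cf m2 mf by apply/mu_key.
have w2 := leM_wt (mfmax _ m2f).
case: (sort_exists Cf_surj m2) => m3 [s3 k3 w3 st3].
have m3E : m3 = mf.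
  by apply: (sorted_uniq Cf_inj s3 smf); apply: samekey_trans k3 k2.
case: (boolP (sortedm Cf m2)) => s2.
  by move/eqP: nm2; apply; apply: (sorted_uniq Cf_inj s2 smf k2).
have := st3 s2; rewrite m3E => lt.
by have := leq_ltn_trans w2 lt; rewrite ltnn.
Qed.

Definition kk i j := odflt i [pick k | Cf k == Cf i :&: Cf j].
Definition ll i j := odflt i [pick k | Cf k == Cf i :|: Cf j].

Lemma kkE i j : Cf (kk i j) = Cf i :&: Cf j.
Proof.
rewrite /kk; case: pickP => [k /eqP //|none].
by case: (Cf_surj (Cf i :&: Cf j)) => k Ck; have := none k; rewrite Ck eqxx.
Qed.

Lemma llE i j : Cf (ll i j) = Cf i :|: Cf j.
Proof.
rewrite /ll; case: pickP => [k /eqP //|none].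
by case: (Cf_surj (Cf i :|: Cf j)) => k Ck; have := none k; rewrite Ck eqxx.
Qed.

Definition gb (p : 'I_n * 'I_n) : {mpoly K[n]} :=
  'X_[U_(p.1) + U_(p.2)] - 'X_[U_(kk p.1 p.2) + U_(ll p.1 p.2)].

Definition GB := [seq gb p | p <- enum {: 'I_n * 'I_n} & incomp Cf p.1 p.2].

Lemma binom_supp a b m : m \in msupp ('X_[a] - 'X_[b] : {mpoly K[n]}) -> m = a \/ m = b.
Proof.
rewrite mcoeff_msupp mcoeffB !mcoeffX.
case: (eqVneq a m) => [->|_]; first by left.
by case: (eqVneq b m) => [->|_]; [right | rewrite subrr eqxx].
Qed.

Lemma binom_lead a b : a != b -> leM b a -> is_lm leM ('X_[a] - 'X_[b] : {mpoly K[n]}) a.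
Proof.
move=> ab ba; split.
  have ba' : (b == a) = false by apply/negbTE; rewrite eq_sym.
  by rewrite mcoeff_msupp mcoeffB !mcoeffX eqxx ba' subr0 oner_neq0.
by move=> m /binom_supp [->|->] //; apply: leM_refl.
Qed.

Lemma sqfreeUU (x y : 'I_n) : x != y -> squarefree_mono (U_(x) + U_(y))%MM.
Proof.
move=> xy; apply/forallP => r; rewrite mnmDE !mnm1E.
case: (eqVneq x r) => [xr|]; case: (eqVneq y r) => [yr|] //=.
by move: xy; rewrite xr yr eqxx.
Qed.

Lemma gb_facts i j : incomp Cf i j ->
  [/\ mu (U_(kk i j) + U_(ll i j))%MM = mu (U_(i) + U_(j))%MM,
      leM (U_(kk i j) + U_(ll i j))%MM (U_(i) + U_(j))%MM,
      (U_(i) + U_(j))%MM != (U_(kk i j) + U_(ll i j))%MM &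
      sqfree_quad_binomial (gb (i, j))].
Proof.
move=> ij; case: (swap_kl ij (kkE i j) (llE i j)) => sk wl kl nij.
have ne : (U_(i) + U_(j))%MM != (U_(kk i j) + U_(ll i j))%MM.
  by apply/eqP => e; move: wl; rewrite e ltnn.
split => //.
- exact/mu_key.
- by rewrite /leM wl.
exists (U_(i) + U_(j))%MM, (U_(kk i j) + U_(ll i j))%MM; split => //.
- by rewrite !sqfreeUU.
- by rewrite mdegD !mdeg1.
- by rewrite mdegD !mdeg1.
Qed.

Lemma GBP g : g \in GB -> exists i j, incomp Cf i j /\ g = gb (i, j).
Proof.
case/mapP => -[i j]; rewrite mem_filter /= => /andP [ij _] ->.
by exists i, j.
Qed.

Lemma GB_ideal g : g \in GB -> cut_ideal E g.
Proof.
case/GBP => i [j [ij ->]]; case: (gb_facts ij) => mE _ _ _.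
by rewrite /cut_ideal /gb /= /phi_G mmapB !mmapX !mmap1E mE subrr.
Qed.

Lemma main : exists le : rel 'X_{1..n},
    monomial_order le /\
    (exists G : seq {mpoly K[n]},
       groebner_basis le (@cut_ideal K V E) G /\
       (forall g, g \in G -> sqfree_quad_binomial g)) /\
    squarefree_initial le (@cut_ideal K V E).
Proof.
have GBgb : groebner_basis leM (@cut_ideal K V E) GB.
  split; first exact: GB_ideal.
  move=> f If nf.
  have [mf mff mfmax] : exists2 mf, mf \in msupp f & forall y, y \in msupp f -> leM y mf.
    by apply: max_exists; rewrite msupp_eq0.
  have lmf : is_lm leM f mf by split.
  case: (unsortedP (lead_unsorted If lmf)) => i [j [mi mj ij]].
  case: (gb_facts ij) => _ le ne _.
  exists (gb (i, j)).
    by apply/mapP; exists (i, j); rewrite // mem_filter ij mem_enum.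
  exists mf, (U_(i) + U_(j))%MM; split => //.
    exact: binom_lead.
  by apply: UU_le => //; case/andP: ij => ij _; apply/eqP => e; move: ij; rewrite e subxx.
exists leM; split; first exact: leM_mo.
split.
  exists GB; split => // g /GBP [i [j [ij ->]]].
  by case: (gb_facts ij).
move=> m [f If [mf mmax]].
have nf : f != 0 by apply: contraTneq mf => ->; rewrite msupp0.
case: (GBgb.2 f If nf) => g gG [mf' [mg [[mf'f mf'max] lmg le]]].
have e : mf' = m by apply: leM_anti; rewrite mmax // mf'max.
subst mf'.
exists mg; split => //.
  by exists g => //; apply: GB_ideal.
case/GBP: gG => i [j [ij eg]].
case: (gb_facts ij) => _ _ _ [m1 [m2 [/andP [s1 s2] _ _ _ eg']]].
case: lmg => mgg _; move: mgg; rewrite eg eg' => /binom_supp [->|->] //.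
Qed.

End Alg.

Theorem corollary4p3 (K : fieldType) (V : finType) (E : rel V) :
  is_tree E -> (2 <= #|edges E|)%N ->
  exists le : rel 'X_{1..#|{: upart V}|},
    monomial_order le /\
    (exists G : seq {mpoly K[#|{: upart V}|]},
       groebner_basis le (@cut_ideal K V E) G /\
       (forall g, g \in G -> sqfree_quad_binomial g)) /\
    squarefree_initial le (@cut_ideal K V E).
Proof. by move=> tree two; apply: (main K tree two). Qed.
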